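(* For all integers $k>1$ and $d\ge k$ there exist a finite point set $P\subset\mathbb{R}^d$ and properties $a_1,\dots,a_k\colon P\to\{-1,1\}$, each strictly linearly separable on $P$, such that exactly $2^k-1$ distinct labels occur in $P$, and such that for every unit vector $w\in\mathbb{R}^d$ the following holds: if $a_2,\dots,a_k$ are all strictly linearly separable on the projected set $P'$, then $a_1$ is also strictly linearly separable on $P'$.
   Context: For a finite $P\subset\mathbb{R}^d$ with properties $a_i\colon P\to\{-1,1\}$, write $P^i_{-}=\{p\in P: a_i(p)=-1\}$ and $P^i_{+}=\{p\in P: a_i(p)=1\}$. The label of $p$ is the tuple $(a_1(p),\dots,a_k(p))$. For a unit vector $w$, the projection along $w$ maps $p$ to $p'=p-(p\cdot w)w\in w^\perp$, and $P'$ denotes the image of $P$ (properties are carried over: $a_i(p')=a_i(p)$). Two finite sets $X,Y$ contained in a linear subspace $L$ are strictly linearly separable (in $L$) if there exist a unit vector $v\in L$ and $c\in\mathbb{R}$ with $v\cdot x<c<v\cdot y$ for all $x\in X,y\in Y$; for projected sets $L=w^\perp$, otherwise $L=\mathbb{R}^d$. A property $a_i$ is strictly linearly separable on a set if the corresponding sets $P^i_-$ and $P^i_+$ (resp. their projections) are. *)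

(* Defs.v *)
From Stdlib Require Import Reals.
From HB Require Import structures.
From mathcomp Require Import all_boot all_order all_algebra.
From mathcomp Require Import Rstruct.
Set Implicit Arguments. Unset Strict Implicit. Unset Printing Implicit Defensive.
Import Order.TTheory GRing.Theory Num.Theory.
Local Open Scope ring_scope.

Definition dotv (d : nat) (u v : 'rV[R]_d) : R := (u *m v^T) 0 0.

Definition projw (d : nat) (w p : 'rV[R]_d) : 'rV[R]_d := p - (dotv p w) *: w.

Definition strict_sep_in (d : nat) (L : 'rV[R]_d -> Prop)
    (X Y : seq 'rV[R]_d) : Prop :=
  exists (v : 'rV[R]_d) (c : R),
    [/\ L v, dotv v v = 1,
        (forall x, x \in X -> dotv v x < c) &
        (forall y, y \in Y -> c < dotv v y)].

Definition fullspace (d : nat) : 'rV[R]_d -> Prop := fun _ => True.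
Definition perp (d : nat) (w : 'rV[R]_d) : 'rV[R]_d -> Prop :=
  fun v => dotv v w = 0.

(* A property a : 'rV -> bool encodes a map to {-1,1}: true = +1, false = -1.
   P^-_a and P^+_a: *)
Definition Pminus (d : nat) (a : 'rV[R]_d -> bool) (P : seq 'rV[R]_d) :=
  [seq p <- P | ~~ a p].
Definition Pplus (d : nat) (a : 'rV[R]_d -> bool) (P : seq 'rV[R]_d) :=
  [seq p <- P | a p].

Definition sep_on (d : nat) (a : 'rV[R]_d -> bool) (P : seq 'rV[R]_d) : Prop :=
  strict_sep_in (@fullspace d) (Pminus a P) (Pplus a P).

Definition sep_on_proj (d : nat) (w : 'rV[R]_d) (a : 'rV[R]_d -> bool)
    (P : seq 'rV[R]_d) : Prop :=
  strict_sep_in (perp w) (map (projw w) (Pminus a P)) (map (projw w) (Pplus a P)).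

(* label of p for properties a_1..a_k, indexed 0..k-1 *)
Definition label (d k : nat) (a : nat -> 'rV[R]_d -> bool) (p : 'rV[R]_d)
  : seq bool := [seq a i p | i <- iota 0 k].

Definition nlabels (d k : nat) (a : nat -> 'rV[R]_d -> bool) (P : seq 'rV[R]_d)
  : nat := size (undup [seq label k a p | p <- P]).

(* Main.v *)
Require Import Defs.
From Stdlib Require Import Reals.
From HB Require Import structures.
From mathcomp Require Import all_boot all_order all_algebra.
From mathcomp Require Import Rstruct.
From mathcomp Require Import ring lra.
Import Order.TTheory GRing.Theory Num.Theory.
Local Open Scope ring_scope.

Section Aux.
Variable d : nat.
Implicit Types u v x y p : 'rV[R]_d.

Lemma dotvE u v : dotv u v = \sum_(i < d) u 0 i * v 0 i.
Proof. by rewrite /dotv !mxE; apply: eq_bigr => i _; rewrite !mxE. Qed.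

Lemma dotvC u v : dotv u v = dotv v u.
Proof. by rewrite !dotvE; apply: eq_bigr => i _; rewrite mulrC. Qed.

Lemma dotvDr u x y : dotv u (x + y) = dotv u x + dotv u y.
Proof. by rewrite !dotvE -big_split; apply: eq_bigr => i _; rewrite !mxE mulrDr. Qed.

Lemma dotvBr u x y : dotv u (x - y) = dotv u x - dotv u y.
Proof.
rewrite !dotvE -sumrB; apply: eq_bigr => i _; rewrite !mxE mulrBr //.
Qed.

Lemma dotvZr u t x : dotv u (t *: x) = t * dotv u x.
Proof. by rewrite !dotvE mulr_sumr; apply: eq_bigr => i _; rewrite !mxE mulrCA. Qed.

Lemma dotvZl u t x : dotv (t *: x) u = t * dotv x u.
Proof. by rewrite dotvC dotvZr dotvC. Qed.

Lemma dotvBl u x y : dotv (x - y) u = dotv x u - dotv y u.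
Proof. by rewrite dotvC dotvBr !(dotvC u). Qed.

Lemma dotv_proj v w p : dotv v w = 0 -> dotv v (projw w p) = dotv v p.
Proof. by move=> h; rewrite /projw dotvBr dotvZr h mulr0 subr0. Qed.

Lemma dotv_gt0 v : v != 0 -> 0 < dotv v v.
Proof.
move=> nz; have [i vi] : exists i, v 0 i != 0.
  apply/existsP; apply: contraR nz => /existsPn h; apply/eqP/rowP => i.
  by rewrite mxE; apply/eqP; move: (h i); rewrite negbK.
rewrite dotvE (bigD1 i) //= ltr_pwDl //; first by rewrite -expr2 lt_def sqr_ge0 andbT sqrf_eq0.
by apply: sumr_ge0 => j _; rewrite -expr2 sqr_ge0.
Qed.

Lemma normalize (L : 'rV[R]_d -> Prop) (X Y : seq 'rV[R]_d) v c :
  (forall t x, L x -> L (t *: x)) -> L v -> v != 0 ->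
  (forall x, x \in X -> dotv v x < c) -> (forall y, y \in Y -> c < dotv v y) ->
  strict_sep_in L X Y.
Proof.
move=> LZ Lv nz hX hY.
have pos := dotv_gt0 v nz.
set n := Num.sqrt (dotv v v).
have n0 : 0 < n by rewrite sqrtr_gt0.
exists (n^-1 *: v), (c / n); split.
- exact: LZ.
- rewrite dotvZl dotvZr -[dotv v v](sqr_sqrtr (ltW pos)) -/n.
  by field; rewrite gt_eqF.
- move=> x /hX h; by rewrite dotvZl [_ * dotv _ _]mulrC ltr_pM2r ?invr_gt0 // h.
- move=> y /hY h; by rewrite dotvZl [_ * dotv _ _]mulrC ltr_pM2r ?invr_gt0 // h.
Qed.

Lemma below (T : eqType) (f : T -> R) (t : R) (Y : seq T) :
  (forall b, b \in Y -> t < f b) ->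
  exists c, t < c /\ (forall b, b \in Y -> c < f b).
Proof.
elim: Y => [|b Y IH] hY.
  by exists (t + 1); split => //; lra.
have [c [h1 h2]] := IH (fun b0 h => hY b0 (@mem_behead _ (b :: Y) _ h)).
have hb := hY b (mem_head _ _).
exists (Num.min c ((t + f b) / 2)); split.
  rewrite lt_min h1 /=; lra.
move=> b0; rewrite in_cons => /orP [/eqP -> | /h2 hb0].
  rewrite gt_min; apply/orP; right; lra.
by rewrite gt_min hb0.
Qed.

Lemma between (T : eqType) (f : T -> R) (t : R) (X Y : seq T) :
  (forall a, a \in X -> f a <= t) -> (forall b, b \in Y -> t < f b) ->
  exists c, (forall a, a \in X -> f a < c) /\ (forall b, b \in Y -> c < f b).
Proof.
move=> hX /below [c [h1 h2]]; exists c; split => // a /hX h; exact: le_lt_trans h h1.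
Qed.
End Aux.

Definition ones (m d : nat) : 'rV[R]_d := \row_(i < d) (if (i < m)%N then 1 else 0).
Definition ev (d j : nat) : 'rV[R]_d := \row_(i < d) ((i : nat) == j)%:R.
Definition nv (m d i : nat) : 'rV[R]_d := if i is j.+1 then ev d j else ones m d.
Definition thr (i : nat) : R := if i is _.+1 then 0 else 2^-1.
Definition acts (m d : nat) (i : nat) (p : 'rV[R]_d) : bool := thr i < dotv (nv m d i) p.

Lemma dotv_ev d j (hj : (j < d)%N) (p : 'rV[R]_d) : dotv (ev d j) p = p 0 (Ordinal hj).
Proof.
rewrite dotvE (bigD1 (Ordinal hj)) //= big1 ?addr0; first by rewrite mxE eqxx mul1r.
move=> i hi; rewrite mxE; case: eqP => [h|]; last by rewrite mul0r.
by move: hi; rewrite -val_eqE /= h eqxx.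
Qed.

Lemma dotv_evr d j (hj : (j < d)%N) (p : 'rV[R]_d) : dotv p (ev d j) = p 0 (Ordinal hj).
Proof. by rewrite dotvC dotv_ev. Qed.

Lemma dotv_ones m d (p : 'rV[R]_d) : dotv (ones m d) p = \sum_(i < d) (if (i < m)%N then p 0 i else 0).
Proof. by rewrite dotvE; apply: eq_bigr => i _; rewrite mxE; case: ifP; rewrite ?mul1r ?mul0r. Qed.

Fixpoint allb (n : nat) : seq (seq bool) :=
  if n is n'.+1 then [seq b :: s | b <- [:: true; false], s <- allb n'] else [:: [::]].

Lemma allbS n : allb n.+1 = [seq b :: s | b <- [:: true; false], s <- allb n].
Proof. by []. Qed.

Lemma size_allb n : size (allb n) = (2 ^ n)%N.
Proof. elim: n => [//|n IH]; rewrite allbS size_allpairs IH expnS //. Qed.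

Lemma mem_allb n s : (s \in allb n) = (size s == n).
Proof.
elim: n s => [|n IH] s; first by case: s.
rewrite allbS; apply/allpairsP/idP => [[[b t] [_ /= ht ->]]|].
  by rewrite /= eqSS -IH.
case: s => [|b t] //= ht; exists (b, t); split => //=.
  by case: b.
by rewrite IH.
Qed.

Lemma uniq_allb n : uniq (allb n).
Proof.
elim: n => [//|n IH]; rewrite allbS; apply: allpairs_uniq => //.
by move=> [b1 s1] [b2 s2] _ _ /= [-> ->].
Qed.

Definition missing (m : nat) : seq bool := true :: nseq m false.
Definition Tset (m : nat) := rem (missing m) (allb m.+1).

Lemma mem_T m s : (s \in Tset m) = (s != missing m) && (size s == m.+1).
Proof. by rewrite /Tset (mem_rem_uniq _ (uniq_allb _)) inE mem_allb. Qed.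

Lemma size_T m : size (Tset m) = (2 ^ m.+1 - 1)%N.
Proof.
rewrite /Tset size_rem ?size_allb ?subn1 //.
by rewrite mem_allb /= size_nseq.
Qed.

Lemma uniq_T m : uniq (Tset m).
Proof. exact/rem_uniq/uniq_allb. Qed.

Definition cv (d : nat) (b0 b : bool) : R :=
  if b0 then (if b then 2 else - (2 * d%:R)^-1) else (if b then (2 * d%:R)^-1 else -1).

Definition pt (m d : nat) (s : seq bool) : 'rV[R]_d :=
  \row_(i < d) (if (i < m)%N then cv d (head false s) (nth false (behead s) i) else 0).

Section Labels.
Variables m d : nat.
Hypothesis hmd : (m < d)%N.

Lemma d_pos : (0 < d)%N. Proof. exact: leq_ltn_trans (leq0n m) hmd. Qed.

Lemma acts_succ j (hj : (j < d)%N) p : acts m d j.+1 p = (0 < p 0 (Ordinal hj)).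
Proof. by rewrite /acts /= dotv_ev. Qed.

Lemma label_cons p :
  label m.+1 (acts m d) p = acts m d 0 p :: [seq acts m d j.+1 p | j <- iota 0 m].
Proof.
rewrite /label /=; congr (_ :: _).
by rewrite -[1%N]/(1 + 0)%N iotaDl -map_comp.
Qed.

Lemma nth_label_succ p j (hj : (j < m)%N) :
  nth false [seq acts m d j.+1 p | j <- iota 0 m] j = acts m d j.+1 p.
Proof. by rewrite (nth_map 0%N) ?size_iota // nth_iota. Qed.

Lemma label_ne_missing p : label m.+1 (acts m d) p != missing m.
Proof.
apply/eqP; rewrite label_cons /missing => -[h0 hs].
have hneg : forall i : 'I_d, (i < m)%N -> p 0 i <= 0.
  move=> i him; have := @nth_label_succ p i him; rewrite hs nth_nseq him.
  rewrite (@acts_succ i (ltn_ord i)) => /esym/negbT; rewrite -leNgt.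
  by have -> : Ordinal (ltn_ord i) = i by apply: val_inj.
move: h0; rewrite /acts /= dotv_ones.
have : \sum_(i < d) (if (i < m)%N then p 0 i else 0) <= 0.
  by apply: sumr_le0 => i _; case: ifP => // /hneg.
move=> h1 h2; clear hs hneg; lra.
Qed.

Lemma size_label p : size (label m.+1 (acts m d) p) = m.+1.
Proof. by rewrite size_map size_iota. Qed.

Let e : R := (2 * d%:R)^-1.

Lemma e_pos : 0 < e.
Proof. rewrite invr_gt0 mulr_gt0 // ltr0n; exact: d_pos. Qed.

Lemma sum_e : \sum_(i < d) e = 2^-1.
Proof.
rewrite sumr_const card_ord /e -mulr_natr.
have : d%:R != 0 :> R by rewrite pnatr_eq0 -lt0n d_pos.
move=> hd; by field.
Qed.

Lemma cv_pos b0 b : (0 < cv d b0 b) = b.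
Proof.
have ep := e_pos; rewrite /cv -/e.
by case: b0; case: b; [apply/idP; lra|apply/negbTE; rewrite -leNgt; lra|apply/idP; lra|apply/negbTE; rewrite -leNgt; lra].
Qed.

Lemma label_pt s : s \in Tset m -> label m.+1 (acts m d) (pt m d s) = s.
Proof.
rewrite mem_T => /andP [hmis hsz].
case: s hmis hsz => [//|b0 bs] hmis /= /eqP [hsz].
rewrite label_cons; congr (_ :: _); last first.
  rewrite -{2}(mkseq_nth false bs) hsz /mkseq; apply/eq_in_map => j.
  rewrite mem_iota add0n /= => hj.
  by rewrite (@acts_succ j (ltn_trans hj hmd)) mxE /= hj cv_pos.
rewrite /acts /= dotv_ones.
have ep := e_pos.
rewrite (eq_bigr (fun i : 'I_d => if (i < m)%N then cv d b0 (nth false bs i) else 0)); last first.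
  by move=> i _; rewrite mxE; case: (i < m)%N.
pose g b := (fun i : 'I_d => if (i < m)%N then cv d b (nth false bs i) else 0).
rewrite (_ : \sum_(i < d) _ = \sum_(i < d) g b0 i) //.
case: b0 hmis => hmis.
+ have [j hj hnj] : exists2 j, (j < m)%N & nth false bs j.
    case: (boolP (has (nth false bs) (iota 0 m))) => [/hasP [j]|/hasPn h].
      by rewrite mem_iota add0n => /= hj hn; exists j.
    move: hmis; rewrite /missing; case/eqP; congr (_ :: _).
    apply: (@eq_from_nth _ false); first by rewrite size_nseq.
    move=> i; rewrite hsz => hi; rewrite nth_nseq hi; apply/negbTE.
    by apply: h; rewrite mem_iota add0n.
  have hjd := ltn_trans hj hmd.
  have hge : forall i, - e <= g true i.
    move=> i; rewrite /g /cv -/e; case: ifP => _; last lra.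
    case: (nth _ _ _); lra.
  have hs : \sum_(i < d) (g true i + e) = \sum_(i < d) g true i + 2^-1 by rewrite big_split sum_e.
  have hge2 : g true (Ordinal hjd) + e <= \sum_(i < d) (g true i + e).
    rewrite (bigD1 (Ordinal hjd)) //= lerDl; apply: sumr_ge0 => i _.
    by have := hge i; lra.
  have hg : g true (Ordinal hjd) = 2 by rewrite /g /= hj hnj.
  move: hge2; rewrite hg hs => h; apply/idP; clear hs hmis hge hnj hsz; lra.
+ apply/negbTE; rewrite -leNgt -sum_e; apply: ler_sum => i _.
  rewrite /g /cv -/e; case: ifP => _; last lra.
  case: (nth _ _ _); lra.
Qed.
End Labels.

Definition xp (m d j l : nat) (s : R) : 'rV[R]_d :=
  ones m d - 2 *: ev d j - (if l == j then 0 else s * d%:R) *: ev d l.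
Definition yp (m d j l : nat) (s : R) : 'rV[R]_d :=
  ones m d + (if l == j then 0 else s * d%:R) *: ev d l.
Definition JL (m : nat) := [seq (j, l) | j <- iota 0 m, l <- iota 0 m].
Definition EX m d := [seq xp m d jl.1 jl.2 s | jl <- JL m, s <- [:: 1; -1]].
Definition EY m d := [seq yp m d jl.1 jl.2 s | jl <- JL m, s <- [:: 1; -1]].
Definition Pset m d := [seq pt m d s | s <- Tset m] ++ EX m d ++ EY m d.

Lemma exmax (T : eqType) (f : T -> R) a s :
  exists2 j, j \in a :: s & forall i, i \in a :: s -> f i <= f j.
Proof.
elim: s a => [|b s IH] a.
  by exists a => [|i]; rewrite ?mem_head // inE => /eqP ->.
have [j hj hmax] := IH b.
case: (lerP (f a) (f j)) => h.
  exists j; first by rewrite inE hj orbT.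
  by move=> i; rewrite inE => /orP [/eqP -> //|]; apply: hmax.
exists a; first exact: mem_head.
move=> i; rewrite inE => /orP [/eqP -> //|/hmax hi]; exact: (le_trans hi (ltW h)).
Qed.

Section Main.
Variables m d : nat.
Hypothesis hmd : (m < d)%N.
Hypothesis hm : (0 < m)%N.

Lemma mem_JL j l : ((j, l) \in JL m) = (j < m)%N && (l < m)%N.
Proof.
apply/allpairsP/andP => [[[a b] [ha hb [-> ->]]]|[hj hl]].
  by move: ha hb; rewrite !mem_iota.
by exists (j, l); rewrite !mem_iota.
Qed.

Lemma mem_EX p : p \in EX m d ->
  exists j l s, [/\ (j < m)%N, (l < m)%N, s \in [:: 1; -1] & p = xp m d j l s].
Proof.
case/allpairsP => [[[j l] s] [/= hjl hs ->]].
by move: hjl; rewrite mem_JL => /andP [hj hl]; exists j, l, s.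
Qed.

Lemma mem_EY p : p \in EY m d ->
  exists j l s, [/\ (j < m)%N, (l < m)%N, s \in [:: 1; -1] & p = yp m d j l s].
Proof.
case/allpairsP => [[[j l] s] [/= hjl hs ->]].
by move: hjl; rewrite mem_JL => /andP [hj hl]; exists j, l, s.
Qed.

Lemma xp_in j l s : (j < m)%N -> (l < m)%N -> s \in [:: 1; -1] -> xp m d j l s \in Pset m d.
Proof.
move=> hj hl hs; rewrite /Pset !mem_cat; apply/orP; right; apply/orP; left.
by apply: (allpairs_f (fun jl s => xp m d jl.1 jl.2 s) (x := (j, l))) => //; rewrite mem_JL hj hl.
Qed.

Lemma yp_in j l s : (j < m)%N -> (l < m)%N -> s \in [:: 1; -1] -> yp m d j l s \in Pset m d.
Proof.
move=> hj hl hs; rewrite /Pset !mem_cat; apply/orP; right; apply/orP; right.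
by apply: (allpairs_f (fun jl s => yp m d jl.1 jl.2 s) (x := (j, l))) => //; rewrite mem_JL hj hl.
Qed.

Lemma tail0 p : p \in Pset m d -> forall i : 'I_d, (m <= i)%N -> p 0 i = 0.
Proof.
move=> hp i hi; have him : (i < m)%N = false by rewrite ltnNge hi.
have evz j : (j < m)%N -> ((i : nat) == j) = false.
  by move=> hj; apply/eqP => h; move: hj; rewrite -h ltnNge hi.
move: hp; rewrite /Pset !mem_cat => /orP [/mapP [s _ ->]|/orP [/mem_EX|/mem_EY]].
- by rewrite mxE him.
- move=> [j [l [s [hj hl _ ->]]]].
  by rewrite !mxE him evz // (evz l) // mulr0 subr0 mulr0 subr0.
- move=> [j [l [s [hj hl _ ->]]]].
  by rewrite !mxE him (evz l) // mulr0 addr0.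
Qed.

Lemma xp_j j l s (hj : (j < m)%N) : xp m d j l s 0 (Ordinal (ltn_trans hj hmd)) = -1.
Proof.
rewrite !mxE /= hj eqxx mulr1; case: (eqVneq l j) => [_|hlj]; first by rewrite mul0r subr0; lra.
by rewrite mulr0 subr0; lra.
Qed.

Lemma yp_j j l s (hj : (j < m)%N) : yp m d j l s 0 (Ordinal (ltn_trans hj hmd)) = 1.
Proof.
rewrite !mxE /= hj; case: (eqVneq l j) => [_|hlj]; first by rewrite mul0r addr0.
by rewrite mulr0 addr0.
Qed.

Lemma nlabels_P : nlabels m.+1 (acts m d) (Pset m d) = (2 ^ m.+1 - 1)%N.
Proof.
rewrite /nlabels -size_T; apply/eqP; rewrite eqn_leq; apply/andP; split.
  apply: uniq_leq_size (undup_uniq _) _ => x; rewrite mem_undup => /mapP [p _ ->].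
  by rewrite mem_T label_ne_missing // size_label eqxx.
apply: uniq_leq_size (uniq_T m) _ => t ht; rewrite mem_undup; apply/mapP.
exists (pt m d t); last by rewrite label_pt.
by rewrite /Pset mem_cat (map_f _ ht).
Qed.

Lemma nv_neq0 i : (i < m.+1)%N -> nv m d i != 0.
Proof.
case: i => [|j] hi.
  apply/eqP => h; have := congr1 (fun M : 'rV[R]_d => M 0 (Ordinal (ltn_trans hm hmd))) h.
  by rewrite !mxE /= hm => /eqP; rewrite oner_eq0.
have hj : (j < d)%N by rewrite ltnS in hi; exact: ltn_trans hi hmd.
apply/eqP => h; have := congr1 (fun M : 'rV[R]_d => M 0 (Ordinal hj)) h.
by rewrite !mxE /= eqxx => /eqP; rewrite oner_eq0.
Qed.

Lemma sep_P i : (i < m.+1)%N -> sep_on (acts m d i) (Pset m d).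
Proof.
move=> hi.
have hX : forall a, a \in Defs.Pminus (acts m d i) (Pset m d) -> dotv (nv m d i) a <= thr i.
  by move=> a; rewrite mem_filter => /andP [ha _]; rewrite leNgt.
have hY : forall b, b \in Defs.Pplus (acts m d i) (Pset m d) -> thr i < dotv (nv m d i) b.
  by move=> b; rewrite mem_filter => /andP [hb _].
have [c [h1 h2]] := @between _ _ _ _ _ hX hY.
by apply: (@normalize d _ _ _ (nv m d i) c) => //; exact: nv_neq0.
Qed.

Lemma acts_succ_ord (jo : 'I_d) p : acts m d jo.+1 p = (0 < p 0 jo).
Proof.
rewrite (@acts_succ m d jo (ltn_ord jo)); congr (0 < p 0 _); exact: val_inj.
Qed.

Lemma dotv_evr_ord (jo : 'I_d) p : dotv p (ev d jo) = p 0 jo.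
Proof. rewrite (@dotv_evr d jo (ltn_ord jo)); congr (p 0 _); exact: val_inj. Qed.

Lemma xp_jo (jo : 'I_d) l s : (jo < m)%N -> xp m d jo l s 0 jo = -1.
Proof.
move=> h; rewrite -(@xp_j jo l s h); congr (xp m d jo l s 0 _); exact: val_inj.
Qed.

Lemma yp_jo (jo : 'I_d) l s : (jo < m)%N -> yp m d jo l s 0 jo = 1.
Proof.
move=> h; rewrite -(@yp_j jo l s h); congr (yp m d jo l s 0 _); exact: val_inj.
Qed.

Lemma proj_P (w : 'rV[R]_d) : dotv w w = 1 ->
  (forall i, (1 <= i < m.+1)%N -> sep_on_proj w (acts m d i) (Pset m d)) ->
  sep_on_proj w (acts m d 0) (Pset m d).
Proof.
move=> hw prem.
pose u : 'rV[R]_d := \row_(i < d) (if (i < m)%N then 0 else w 0 i).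
have hd0 : (0 < d)%N := ltn_trans hm hmd.
case: (eqVneq u 0) => hu.
- exfalso.
  have wtail : forall i : 'I_d, (m <= i)%N -> w 0 i = 0.
    move=> i hi; have := congr1 (fun M : 'rV[R]_d => M 0 i) hu.
    by rewrite !mxE ltnNge hi.
  pose s := filter (fun i : 'I_d => (i < m)%N) (enum 'I_d).
  have [j hjs hmax] := @exmax _ (fun i : 'I_d => `|w 0 i|) (Ordinal hd0) s.
  have hjm : (j < m)%N.
    move: hjs; rewrite inE => /orP [/eqP -> //|]; by rewrite mem_filter => /andP [].
  have hmax' : forall i : 'I_d, (i < m)%N -> `|w 0 i| <= `|w 0 j|.
    by move=> i hi; apply: hmax; rewrite inE mem_filter hi mem_enum orbT.
  have wj0 : 0 < `|w 0 j|.
    rewrite normr_gt0; apply/negP => /eqP hwj.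
    have : dotv w w = 0.
      rewrite dotvE big1 // => i _.
      case: (ltnP i m) => hi.
        by have := hmax' i hi; rewrite hwj normr0 normr_le0 => /eqP ->; rewrite mulr0.
      by rewrite wtail // mulr0.
    by rewrite hw => /eqP; rewrite oner_eq0.
  have hj1 : (1 <= j.+1 < m.+1)%N by apply/andP; split; [|rewrite ltnS].
  have [v [c [hvw hvv hx hy]]] := prem _ hj1.
  rewrite /perp in hvw.
  have pair : forall (l : nat) s0, (l < m)%N -> s0 \in [:: 1; -1] ->
      dotv v (xp m d j l s0) < dotv v (yp m d j l s0).
    move=> l s0 hl hs.
    have hxm : xp m d j l s0 \in Defs.Pminus (acts m d j.+1) (Pset m d).
      by rewrite mem_filter xp_in // andbT acts_succ_ord xp_jo // -leNgt; lra.
    have hym : yp m d j l s0 \in Defs.Pplus (acts m d j.+1) (Pset m d).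
      by rewrite mem_filter yp_in // andbT acts_succ_ord yp_jo //; lra.
    have := hx _ (map_f (projw w) hxm); have := hy _ (map_f (projw w) hym).
    rewrite !dotv_proj // => h1 h2; exact: lt_trans h2 h1.
  have hdiff : forall (l : 'I_d) s0, (l < m)%N -> s0 \in [:: 1; -1] ->
      0 < 2 * v 0 j + 2 * ((if (l : nat) == j then 0 else s0 * d%:R) * v 0 l).
    move=> l s0 hl hs; have := pair l s0 hl hs.
    rewrite /xp /yp !dotvBr !dotvDr !dotvZr !dotv_evr_ord => h.
    move: h; set t := ((if (l : nat) == j then 0 else s0 * d%:R) * v 0 l) => h; lra.
  have vjpos : 0 < v 0 j.
    have := hdiff j 1 hjm (mem_head _ _); rewrite eqxx mul0r mulr0 addr0; lra.
  have dpos : 0 < d%:R :> R by rewrite ltr0n.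
  have bnd : forall l : 'I_d, (l < m)%N -> l != j -> `|v 0 l| <= v 0 j / d%:R.
    move=> l hl hlj; have hlj' : ((l : nat) == j) = false by apply/negbTE.
    have hm1 : (-1 : R) \in [:: 1; -1] by rewrite !inE eqxx orbT.
    have := hdiff l 1 hl (mem_head _ _); have := hdiff l (-1) hl hm1.
    rewrite hlj' ler_pdivlMr // => h1 h2.
    case: (lerP 0 (v 0 l)) => hv0; [rewrite ger0_norm // | rewrite ltr0_norm //]; nra.
  have hsum := hvw; rewrite dotvE (bigD1 j) //= in hsum.
  set S := \sum_(i < d | i != j) v 0 i * w 0 i in hsum.
  pose c0 := v 0 j * `|w 0 j| / d%:R.
  have c0pos : 0 < c0 by rewrite /c0 divr_gt0 // mulr_gt0.
  have hS : `|S| <= \sum_(i < d | i != j) c0.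
    apply: le_trans (ler_norm_sum _ _ _) _.
    apply: ler_sum => i hij; rewrite normrM.
    case: (ltnP i m) => him.
      apply: le_trans (ler_pM _ _ (bnd i him hij) (hmax' i him)) _ => //.
      by rewrite /c0 mulrAC.
    by rewrite wtail // normr0 mulr0 ltW.
  have hc : \sum_(i < d) c0 = c0 + \sum_(i < d | i != j) c0 by rewrite (bigD1 j).
  have hc2 : \sum_(i < d) c0 = v 0 j * `|w 0 j|.
    rewrite sumr_const card_ord /c0 -mulr_natr; field; exact: lt0r_neq0.
  have hvj : `|v 0 j * w 0 j| = `|S|.
    by rewrite -normrN; congr `|_|; lra.
  move: hvj; rewrite normrM (ger0_norm (ltW vjpos)) => hvj.
  clear hsum hdiff pair hx hy hmax; lra.
- have huw : dotv u w = dotv u u.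
    by rewrite !dotvE; apply: eq_bigr => i _; rewrite !mxE; case: ifP; rewrite ?mul0r.
  have hpos := @dotv_gt0 d u hu.
  pose kk := dotv (ones m d) w / dotv u w.
  pose v := ones m d - kk *: u.
  have hvw : dotv v w = 0.
    rewrite /v dotvBl dotvZl huw /kk huw; field; exact: lt0r_neq0.
  have hvp : forall p, p \in Pset m d -> dotv v (projw w p) = dotv (ones m d) p.
    move=> p hp; rewrite dotv_proj // /v dotvBl dotvZl.
    have -> : dotv u p = 0.
      rewrite dotvE big1 // => i _; rewrite mxE; case: ltnP => hi; first by rewrite mul0r.
      by rewrite (@tail0 p hp i hi) mulr0.
    by rewrite mulr0 subr0.
  have hX : forall a, a \in map (projw w) (Defs.Pminus (acts m d 0) (Pset m d)) -> dotv v a <= 2^-1.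
    move=> a /mapP [x hx ->]; move: hx; rewrite mem_filter => /andP [hx hxP].
    by rewrite hvp // leNgt.
  have hY : forall a, a \in map (projw w) (Defs.Pplus (acts m d 0) (Pset m d)) -> 2^-1 < dotv v a.
    move=> a /mapP [x hx ->]; move: hx; rewrite mem_filter => /andP [hx hxP].
    by rewrite hvp.
  have [c [h1 h2]] := @between _ _ _ _ _ hX hY.
  apply: (@normalize d (perp w) _ _ v c) => //.
    by move=> t x; rewrite /perp dotvZl => ->; rewrite mulr0.
  apply/eqP => h; have := congr1 (fun M : 'rV[R]_d => M 0 (Ordinal hd0)) h.
  rewrite !mxE /= hm mulr0 subr0 => /eqP; by rewrite oner_eq0.
Qed.

End Main.

(* Properties a_1, ..., a_k are a 0, ..., a (k-1); a_1 is a 0. *)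
Theorem mainTheorem2 (k d : nat) (hk : (1 < k)%N) (hd : (k <= d)%N) :
  exists (P : seq 'rV[R]_d) (a : nat -> 'rV[R]_d -> bool),
    [/\ (forall i, (i < k)%N -> sep_on (a i) P),
        nlabels k a P = (2 ^ k - 1)%N &
        forall w : 'rV[R]_d, dotv w w = 1 ->
          (forall i, (1 <= i < k)%N -> sep_on_proj w (a i) P) ->
          sep_on_proj w (a 0%N) P].
Proof.
case: k hk hd => [//|m] hk hd.
have hm : (0 < m)%N by [].
have hmd : (m < d)%N by [].
exists (Pset m d), (acts m d); split.
- by move=> i hi; apply: sep_P.
- exact: nlabels_P.
- by move=> w hw prem; apply: proj_P.
Qed.
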